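(* \[ \frac{7\zeta(3)}{2}=\sum_{n=0}^{\infty}\left(\frac14\right)^n\frac{(1)_n^3}{\left(\frac32\right)_n^3}\Big((6n+4)\,O_{n+1}-1\Big). \]
   Context: $(x)_n=x(x+1)\cdots(x+n-1)$ is the Pochhammer symbol, with $(x)_0=1$. $O_m=\sum_{j=1}^{m}\frac{1}{2j-1}$ is the $m$-th odd harmonic number. $\zeta(3)=\sum_{j\ge1}j^{-3}$ is Apéry's constant. *)

(* Defs.v *)
From Stdlib Require Import Reals.
From Coquelicot Require Import Coquelicot.
Open Scope R_scope.

Fixpoint poch (x : R) (n : nat) : R :=
  match n with
  | O => 1
  | S m => poch x m * (x + INR m)
  end.

(* Odd harmonic number O_m = sum_{j=1}^m 1/(2j-1) *)
Fixpoint oddH (m : nat) : R :=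
  match m with
  | O => 0
  | S k => oddH k + / (2 * INR (S k) - 1)
  end.

Definition zeta3 : R := Series (fun j : nat => / (INR (S j)) ^ 3).

Definition apery_term (n : nat) : R :=
  (/ 4) ^ n * (poch 1 n) ^ 3 / (poch (3 / 2) n) ^ 3
    * ((6 * INR n + 4) * oddH (S n) - 1).

(* Main.v *)
Require Import Defs.
From Stdlib Require Import Reals Lra Lia Psatz.
From Coquelicot Require Import Coquelicot.
Open Scope R_scope.

Fixpoint fsum (f : nat -> R) (n : nat) : R :=
  match n with O => 0 | S m => fsum f m + f m end.

Lemma poch_pos x n : 0 < x -> 0 < poch x n.
Proof. intros Hx; induction n; simpl; [lra|]. apply Rmult_lt_0_compat; auto. pose proof (pos_INR n); lra. Qed.

Lemma poch_shift x n : poch (x+1) n * x = poch x n * (x + INR n).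
Proof. induction n; cbn [poch]. simpl; lra. rewrite S_INR.
 transitivity (poch (x + 1) n * x * (x + 1 + INR n)). ring. rewrite IHn. ring. Qed.

Lemma poch_le x y n : 0 < x -> x <= y -> poch x n <= poch y n.
Proof. intros Hx Hxy; induction n; simpl; [lra|].
 pose proof (pos_INR n). pose proof (poch_pos x n Hx).
 apply Rmult_le_compat; lra. Qed.

Definition U (n k : nat) : R :=
  (/4)^n * poch 1 n ^ 3 / (poch (3/2) n * (2 * INR k + 1)^2 * poch (INR k + 3/2) n ^ 2).

Fixpoint L (n k : nat) : R :=
  match n with
  | O => - 4 / (2 * INR k + 1)
  | S m => L m k - 4 / (2 * INR k + 2 * INR m + 3)
  end.

Definition Fd n k := U n k * (2 * (2 * INR n + 1) * L n k).
Definition Gd n k := U n k * (2 + (3 * INR n + 2 + 2 * INR k) * L n k).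

Lemma L_Sk n k : L n (S k) = L n k + 4 / (2 * INR k + 1) - 4 / (2 * INR k + 2 * INR n + 3).
Proof.
 pose proof (pos_INR k). induction n; cbn [L]; rewrite ?S_INR.
 - replace (INR 0) with 0 by reflexivity. field. lra.
 - rewrite IHn. pose proof (pos_INR n). field. lra.
Qed.

Lemma U_Sn n k : U (S n) k = U n k * ((/4) * (INR n + 1)^3 / ((3/2 + INR n) * (INR k + 3/2 + INR n)^2)).
Proof.
 unfold U. pose proof (pos_INR k). pose proof (pos_INR n).
 pose proof (poch_pos (3/2) n ltac:(lra)). pose proof (poch_pos (INR k + 3/2) n ltac:(lra)).
 cbn [poch pow]. field. repeat split; lra.
Qed.

Lemma U_Sk n k : U n (S k) = U n k * ((2 * INR k + 1)^2 / (4 * (INR k + INR n + 3/2)^2)).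
Proof.
 unfold U. pose proof (pos_INR k). pose proof (pos_INR n).
 pose proof (poch_pos (3/2) n ltac:(lra)). pose proof (poch_pos (INR k + 3/2) n ltac:(lra)).
 pose proof (poch_pos (INR k + 1 + 3/2) n ltac:(lra)).
 pose proof (poch_shift (INR k + 3/2) n) as E.
 replace (INR k + 3/2 + 1) with (INR k + 1 + 3/2) in E by ring.
 rewrite S_INR.
 assert (Hp : poch (INR k + 1 + 3/2) n = poch (INR k + 3 / 2) n * (INR k + 3 / 2 + INR n) / (INR k + 3/2)).
 { rewrite <- E. field. lra. }
 rewrite Hp. field. repeat split; try lra. 
Qed.

Lemma WZd n k : Fd (S n) k - Fd n k = Gd n (S k) - Gd n k.
Proof.
 unfold Fd, Gd. rewrite U_Sn, U_Sk, L_Sk. cbn [L]. rewrite !S_INR.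
 pose proof (pos_INR k). pose proof (pos_INR n).
 field. repeat split; lra.
Qed.

Lemma tele_inner N K : fsum (fun k => Fd (S N) k) K - fsum (fun k => Fd N k) K = Gd N K - Gd N 0.
Proof. induction K; simpl fsum. lra. pose proof (WZd N K). lra. Qed.

Lemma tele N K : fsum (fun n => Gd n 0) N = fsum (fun k => Fd 0 k) K + fsum (fun n => Gd n K) N - fsum (fun k => Fd N k) K.
Proof. induction N; simpl fsum. lra. pose proof (tele_inner N K). lra. Qed.

Lemma L_bounds n k : L n k <= 0 /\ - L n k <= 4 * (INR n + 1).
Proof. pose proof (pos_INR k). induction n; cbn [L].
 - replace (INR 0) with 0 by reflexivity. split.
   + assert (0 < 4 / (2 * INR k + 1)) by (apply Rdiv_lt_0_compat; lra). lra.
   + assert (4 / (2 * INR k + 1) <= 4). { apply Rmult_le_reg_r with (2 * INR k + 1). lra.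
       field_simplify; lra. } lra.
 - rewrite S_INR. pose proof (pos_INR n).
   assert (0 < 4 / (2 * INR k + 2 * INR n + 3)) by (apply Rdiv_lt_0_compat; lra).
   assert (4 / (2 * INR k + 2 * INR n + 3) <= 4). { apply Rmult_le_reg_r with (2 * INR k + 2 * INR n + 3). lra.
       field_simplify; lra. }
   lra.
Qed.

Lemma U_bounds n k : 0 <= U n k <= (/4)^n / (2 * INR k + 1)^2.
Proof.
 pose proof (pos_INR k).
 pose proof (poch_pos 1 n ltac:(lra)) as H1.
 pose proof (poch_pos (3/2) n ltac:(lra)) as H2.
 pose proof (poch_pos (INR k + 3/2) n ltac:(lra)) as H3.
 pose proof (poch_le 1 (3/2) n ltac:(lra) ltac:(lra)) as H4.
 pose proof (poch_le 1 (INR k + 3/2) n ltac:(lra) ltac:(lra)) as H5.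
 assert (Hq : 0 < (/4)^n) by (apply pow_lt; lra).
 set (p := poch 1 n) in *. set (a := poch (3/2) n) in *. set (b := poch (INR k + 3/2) n) in *.
 assert (E : U n k = (/4)^n / (2 * INR k + 1)^2 * (p^3 / (a * b^2))).
 { unfold U. fold p a b. field. repeat split; lra. }
 rewrite E.
 assert (0 < (/4)^n / (2 * INR k + 1)^2) by (apply Rdiv_lt_0_compat; nra).
 assert (0 <= p^3 / (a * b^2) <= 1).
 { split. apply Rlt_le. apply Rdiv_lt_0_compat. apply pow_lt; lra. pose proof (pow_lt b 2 H3). nra.
   apply Rmult_le_reg_r with (a * b^2). apply Rmult_lt_0_compat; [lra| apply pow_lt; lra].
   field_simplify; [|split; lra].
   assert (p * p <= b * b) by (apply Rmult_le_compat; lra).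
   assert (p * (p * p) <= a * (b * b)) by (apply Rmult_le_compat; nra).
   simpl. lra. }
 split. nra. nra.
Qed.

Lemma Fd_bound N k : Rabs (Fd N k) <= (/4)^N * (8 * (2 * INR N + 1) * (INR N + 1)).
Proof.
 destruct (L_bounds N k) as [HL1 HL2]. destruct (U_bounds N k) as [HU1 HU2].
 pose proof (pos_INR N). pose proof (pos_INR k).
 assert (Hq : 0 < (/4)^N) by (apply pow_lt; lra).
 assert (HU3 : U N k <= (/4)^N).
 { eapply Rle_trans; [exact HU2|]. apply Rmult_le_reg_r with ((2 * INR k + 1)^2). nra.
   field_simplify; [|nra]. nra. }
 unfold Fd. rewrite Rabs_left1.
 - assert (0 <= U N k * (2 * (2 * INR N + 1)) * (- L N k)) by (apply Rmult_le_pos; nra).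
   assert (U N k * (2 * (2 * INR N + 1)) * (- L N k) <= (/4)^N * (2 * (2 * INR N + 1)) * (4 * (INR N + 1))).
   { apply Rmult_le_compat; try nra. }
   nra.
 - assert (0 <= U N k * (2 * (2 * INR N + 1)) * (- L N k)) by (apply Rmult_le_pos; nra). nra.
Qed.

Lemma Gd_bound n K : Rabs (Gd n K) <= (/4)^n * (14 * (INR n + 1)^2) / (2 * INR K + 1).
Proof.
 destruct (L_bounds n K) as [HL1 HL2]. destruct (U_bounds n K) as [HU1 HU2].
 pose proof (pos_INR n). pose proof (pos_INR K).
 assert (Hq : 0 < (/4)^n) by (apply pow_lt; lra).
 set (c := 3 * INR n + 2 + 2 * INR K).
 assert (Hc : 0 <= c) by (unfold c; lra).
 assert (Habs : Rabs (2 + c * L n K) <= 2 + c * (4 * (INR n + 1))).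
 { apply Rabs_le. split; nra. }
 unfold Gd. fold c. rewrite Rabs_mult, (Rabs_right (U n K)) by lra.
 eapply Rle_trans. apply Rmult_le_compat_l. lra. exact Habs.
 eapply Rle_trans. apply Rmult_le_compat_r. nra. exact HU2.
 unfold c. apply Rmult_le_reg_r with ((2 * INR K + 1)^2). nra.
 field_simplify; try nra.
 assert (HH : 2 + (3 * INR n + 2 + 2 * INR K) * (4 * (INR n + 1)) <= 14 * (INR n + 1)^2 * (2 * INR K + 1)) by nra.
 assert (0 <= (/4)^n * (2 * INR K + 1)) by nra.
 nra.
Qed.

Lemma pow2_bound n : (INR n + 1)^2 <= 4 * 2^n.
Proof.
 induction n as [|n IH]. simpl. lra.
 rewrite S_INR. destruct n as [|n]. simpl. lra.
 rewrite S_INR in *. pose proof (pos_INR n). simpl pow in *.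
 destruct n as [|n]. simpl. lra. rewrite S_INR in *. pose proof (pos_INR n). nra.
Qed.

Lemma fsum_half N : fsum (fun n => (/2)^n) N = 2 - 2 * (/2)^N.
Proof. induction N; simpl fsum. simpl. lra. rewrite IHN. simpl. lra. Qed.

Lemma fsum_abs_le f g N : (forall n, Rabs (f n) <= g n) -> Rabs (fsum f N) <= fsum g N.
Proof. intros H. induction N; simpl fsum. rewrite Rabs_R0. lra.
 eapply Rle_trans. apply Rabs_triang. specialize (H N). lra. Qed.

Lemma fsum_const c N : fsum (fun _ => c) N = INR N * c.
Proof. induction N; simpl fsum. simpl. lra. rewrite IHN, S_INR. lra. Qed.

Definition E N := fsum (fun n => Gd n N) N - fsum (fun k => Fd N k) N.

Lemma E_bound N : Rabs (E N) <= 400 / (INR N + 1).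
Proof.
 pose proof (pos_INR N).
 assert (HG : Rabs (fsum (fun n => Gd n N) N) <= 112 / (INR N + 1)).
 { eapply Rle_trans. apply fsum_abs_le with (g := fun n => 56 / (2 * INR N + 1) * (/2)^n).
   - intros n. eapply Rle_trans. apply Gd_bound.
     pose proof (pow2_bound n). pose proof (pos_INR n).
     assert (E4 : (/4)^n * 2^n = (/2)^n).
     { rewrite <- Rpow_mult_distr. f_equal. lra. }
     assert (Hq : 0 < (/4)^n) by (apply pow_lt; lra).
     assert ((/4)^n * (14 * (INR n + 1)^2) <= 56 * (/2)^n) by nra.
     apply Rmult_le_reg_r with (2 * INR N + 1). lra.
     field_simplify; try lra.
   - induction N as [|M _]. simpl. lra.
     clear H. 
     assert (Hs : forall c m, fsum (fun n => c * (/2)^n) m = c * fsum (fun n => (/2)^n) m).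
     { intros c m. induction m; simpl fsum. lra. rewrite IHm. lra. }
     rewrite Hs, fsum_half. pose proof (pos_INR (S M)).
     assert (0 < (/2)^(S M)) by (apply pow_lt; lra).
     assert (56 / (2 * INR (S M) + 1) * (2 - 2 * (/ 2) ^ S M) <= 112 / (2 * INR (S M) + 1)).
     { unfold Rdiv. assert (0 < / (2 * INR (S M) + 1)) by (apply Rinv_0_lt_compat; lra). nra. }
     eapply Rle_trans. exact H1.
     apply Rmult_le_reg_r with ((2 * INR (S M) + 1) * (INR (S M) + 1)). nra.
     field_simplify; lra. }
 assert (HF : Rabs (fsum (fun k => Fd N k) N) <= 256 / (INR N + 1)).
 { eapply Rle_trans. apply fsum_abs_le with (g := fun _ => (/4)^N * (8 * (2 * INR N + 1) * (INR N + 1))).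
   intros k. apply Fd_bound.
   rewrite fsum_const.
   pose proof (pow2_bound N).
   assert (E4 : (/4)^N * 2^N * 2^N = 1).
   { rewrite <- !Rpow_mult_distr. replace (/4 * 2 * 2) with 1 by lra. apply pow1. }
   assert (Hq : 0 < (/4)^N) by (apply pow_lt; lra).
   assert (H4 : (INR N + 1)^4 * (/4)^N <= 16).
   { replace ((INR N + 1)^4) with ((INR N + 1)^2 * (INR N + 1)^2) by ring.
     assert (0 <= (INR N + 1)^2) by nra.
     assert ((INR N + 1)^2 * (INR N + 1)^2 <= (4 * 2^N) * (4 * 2^N)) by (apply Rmult_le_compat; nra).
     nra. }
   apply Rmult_le_reg_r with (INR N + 1). lra.
   field_simplify; try lra. nra. }
 unfold E. unfold Rminus. eapply Rle_trans. apply Rabs_triang. rewrite Rabs_Ropp.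
 assert (112 / (INR N + 1) + 256 / (INR N + 1) <= 400 / (INR N + 1)).
 { unfold Rdiv. assert (0 < / (INR N + 1)) by (apply Rinv_0_lt_compat; lra). nra. }
 lra.
Qed.

Lemma lim_inv_n1 c : is_lim_seq (fun N => c / (INR N + 1)) 0.
Proof.
 assert (H : is_lim_seq (fun N => / (INR N + 1)) 0).
 { pose proof (proj1 (is_lim_seq_incr_1 _ _) is_lim_seq_INR) as H0.
   eapply is_lim_seq_ext. 2: { apply (is_lim_seq_inv _ _ H0). discriminate. }
   intros n. cbv beta. rewrite S_INR. reflexivity. }
 apply (is_lim_seq_scal_l _ c) in H. simpl in H. rewrite Rmult_0_r in H.
 eapply is_lim_seq_ext; [|exact H]. intros n; unfold Rdiv; reflexivity.
Qed.

Lemma E_lim : is_lim_seq E 0.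
Proof.
 apply is_lim_seq_le_le with (u := fun N => - (400 / (INR N + 1))) (w := fun N => 400 / (INR N + 1)).
 - intros n. pose proof (E_bound n) as H. apply Rabs_le_between in H. lra.
 - pose proof (proj1 (is_lim_seq_opp _ _) (lim_inv_n1 400)) as H. simpl in H.
   replace (- 0) with 0 in H by lra. exact H.
 - apply lim_inv_n1.
Qed.

Definition zt (j : nat) : R := / (INR (S j)) ^ 3.
Definition od (k : nat) : R := / (2 * INR k + 1) ^ 3.

Lemma fsum_sumf f n : sum_f_R0 f n = fsum f (S n).
Proof. induction n; simpl. lra. rewrite IHn. simpl. reflexivity. Qed.

Lemma lim_of_series a (l : R) : is_series a l -> is_lim_seq (fsum a) l.
Proof.
 intros H. apply is_series_Reals in H. apply is_lim_seq_Reals in H.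
 apply is_lim_seq_incr_1. eapply is_lim_seq_ext; [|exact H]. intros n. apply fsum_sumf.
Qed.

Lemma series_of_lim a (l : R) : is_lim_seq (fsum a) l -> is_series a l.
Proof.
 intros H. apply is_series_Reals. apply is_lim_seq_Reals.
 apply is_lim_seq_incr_1 in H. eapply is_lim_seq_ext; [|exact H]. intros n. symmetry. apply fsum_sumf.
Qed.

Lemma zt_ex : ex_series zt.
Proof.
  apply (@ex_series_le R_AbsRing R_CompleteNormedModule) with (b := fun n => 2 * (/ INR (S n) - / INR (S (S n)))).
 - intros n. unfold zt. rewrite !S_INR. pose proof (pos_INR n).
   change (Rabs (/ (INR n + 1)^3) <= 2 * (/ (INR n + 1) - / (INR n + 1 + 1))).
   rewrite Rabs_right.
   2: { apply Rle_ge, Rlt_le, Rinv_0_lt_compat. apply pow_lt. lra. }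
   apply Rmult_le_reg_r with ((INR n + 1)^3 * (INR n + 1 + 1)). apply Rmult_lt_0_compat; [apply pow_lt|]; lra.
   field_simplify; try lra. nra.
 - exists 2. apply series_of_lim.
   assert (Ht : forall N, fsum (fun n => 2 * (/ INR (S n) - / INR (S (S n)))) N = 2 - 2 / (INR N + 1)).
   { induction N; cbn [fsum]. simpl. lra. rewrite IHN. rewrite !S_INR. pose proof (pos_INR N). field. lra. }
   eapply is_lim_seq_ext. intros N. symmetry. apply Ht.
   replace 2 with (2 - 0) at 1 by lra. apply is_lim_seq_minus'. apply is_lim_seq_const. apply lim_inv_n1.
Qed.

Lemma zt_split M : fsum zt (2 * M) = fsum od M + / 8 * fsum zt M.
Proof.
 induction M. simpl. lra.
 replace (2 * S M)%nat with (S (S (2 * M))) by lia. cbn [fsum]. rewrite IHM.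
 unfold zt, od. rewrite !S_INR, mult_INR. simpl (INR 2). pose proof (pos_INR M).
 field. lra.
Qed.

Lemma od_lim : is_lim_seq (fsum od) (7 / 8 * zeta3).
Proof.
 pose proof (lim_of_series _ _ (Series_correct _ zt_ex)) as H.
 assert (H2 : is_lim_seq (fun M => fsum zt (2 * M)) (Series zt)).
 { apply (is_lim_seq_subseq (fsum zt) _ (fun M => 2 * M)%nat). apply eventually_subseq. intros; lia. exact H. }
 pose proof (is_lim_seq_minus' _ _ _ _ H2 (is_lim_seq_scal_l _ (/8) _ H)) as H3.
 replace (7 / 8 * zeta3) with (Series zt - / 8 * Series zt).
 2: { unfold zeta3. change (Series (fun j : nat => / INR (S j) ^ 3)) with (Series zt). lra. }
 eapply is_lim_seq_ext. 2: exact H3.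
 intros M. cbv beta. rewrite zt_split. ring.
Qed.


Lemma L0 n : L n 0 = -4 * oddH (S n).
Proof.
 induction n. cbn [L oddH]. simpl. field.
 cbn [L]. rewrite IHn. change (oddH (S (S n))) with (oddH (S n) + / (2 * INR (S (S n)) - 1)).
 rewrite !S_INR. replace (INR 0) with 0 by reflexivity. pose proof (pos_INR n). field. lra.
Qed.

Lemma apery_Gd n : apery_term n = - / 2 * Gd n 0.
Proof.
 unfold apery_term, Gd, U. rewrite L0.
 replace (INR 0) with 0 by reflexivity. replace (0 + 3/2) with (3/2) by lra.
 pose proof (poch_pos (3/2) n ltac:(lra)). field. lra.
Qed.

Lemma Fd0 k : Fd 0 k = -8 * od k.
Proof.
 unfold Fd, U, od. cbn [L poch pow]. replace (INR 0) with 0 by reflexivity.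
 pose proof (pos_INR k). field. lra.
Qed.

Theorem mainTheorem3 : is_series apery_term (7 * zeta3 / 2).
Proof.
 apply series_of_lim.
 assert (Hs : forall N, fsum apery_term N = 4 * fsum od N - / 2 * E N).
 { intros N. unfold E.
   assert (H1 : fsum apery_term N = - / 2 * fsum (fun n => Gd n 0) N).
   { clear. induction N; cbn [fsum]. lra. rewrite IHN, apery_Gd. ring. }
   assert (H2 : fsum (fun k => Fd 0 k) N = -8 * fsum od N).
   { clear. induction N; cbn [fsum]. lra. rewrite IHN, Fd0. ring. }
   rewrite H1, (tele N N), H2. field. }
 eapply is_lim_seq_ext. intros N. symmetry. apply Hs.
 replace (7 * zeta3 / 2) with (4 * (7 / 8 * zeta3) - / 2 * 0) by lra.
 apply is_lim_seq_minus'. apply (is_lim_seq_scal_l _ 4 _ od_lim).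
 apply (is_lim_seq_scal_l _ (/2) _ E_lim).
Qed.
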